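(* Let $\rho$ be a symmetric probability measure on $\mathbb{R}$ with positive variance $\sigma^2$ such that $(0,0)$ belongs to the interior of $D_\Lambda=\{(u,v)\in\mathbb{R}^2:\Lambda(u,v)<+\infty\}$, where $\Lambda(u,v)=\ln\int_{\mathbb{R}}e^{uz+vz^2}\,d\rho(z)$. Then there exist $\gamma>0$ and $\delta_0\in\,]0,\sigma^2[$ such that for every $\delta\in\,]0,\delta_0]$ there is $N\ge 1$ with \[\forall n\ge N\qquad \int_{\Delta^{*}} e^{nx^2/(2y)}\mathbf{1}_{\{0<y\le\delta\}}\,d\widetilde{\nu}_{n,\rho}(x,y)\le e^{-n\gamma}.\]
   Context: $\Delta=\{(x,y)\in\mathbb{R}^2: x^2\le y\}$ and $\Delta^{*}=\Delta\setminus\{(0,0)\}$. For $n\ge1$, $\widetilde{\nu}_{n,\rho}$ denotes the law of $\left(\frac1n\sum_{i=1}^n X_i,\frac1n\sum_{i=1}^n X_i^2\right)$ where $X_1,\dots,X_n$ are i.i.d. with law $\rho$. *)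

(* Defs.v *)
From HB Require Import structures.
From mathcomp Require Import all_boot all_order all_algebra.
From mathcomp Require Import all_classical all_reals all_analysis.
Set Implicit Arguments. Unset Strict Implicit. Unset Printing Implicit Defensive.
Import Order.TTheory GRing.Theory Num.Theory.
Import numFieldNormedType.Exports.
Local Open Scope classical_set_scope.
Local Open Scope ring_scope.

Definition Delta (R : realType) : set (R * R)%type := [set p | p.1 ^+ 2 <= p.2].
Definition Deltastar (R : realType) : set (R * R)%type := @Delta R `\` [set (0, 0)].

(* Lambda(u,v) = ln \int e^{uz+vz^2} drho(z); Lambda(u,v) < +oo iff the
   integral is finite *)
Definition Lambda_finite (R : realType) (rho : probability R R) (u v : R) :=
  (\int[rho]_z (expR (u * z + v * z ^+ 2))%:E < +oo)%E.

Definition symmetric_prob (R : realType) (rho : probability R R) :=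
  forall A : set R, measurable A -> rho ((fun z => - z) @^-1` A) = rho A.

Definition iid_law d (T : measurableType d) (R : realType)
  (P : probability T R) (n : nat) (X : 'I_n -> T -> R) (rho : probability R R) :=
  [/\ forall i, measurable_fun setT (X i),
      forall i (B : set R), measurable B -> P (X i @^-1` B) = rho B &
      forall B : 'I_n -> set R, (forall i, measurable (B i)) ->
        P (\bigcap_i (X i @^-1` B i)) = \big[*%E/1%E]_(i < n) P (X i @^-1` B i)].

Definition empirical_pair (R : realType) (n : nat) (x : 'I_n -> R) : R * R :=
  ((\sum_(i < n) x i) / n%:R, (\sum_(i < n) x i ^+ 2) / n%:R).

(* nu~_{n,rho}: the law of the empirical pair, realized on (T, P) by X *)
Definition nu_tilde d (T : measurableType d) (R : realType)
  (P : probability T R) (n : nat) (X : 'I_n -> T -> R) : set (R * R)%type -> \bar R :=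
  pushforward P (fun w => empirical_pair (fun i => X i w)).

(* Main.v *)
Require Import Defs.
From HB Require Import structures.
Set Warnings "-all".
From mathcomp Require Import all_boot all_order all_algebra.
From mathcomp Require Import all_classical all_reals all_analysis.
From mathcomp Require Import measurable_realfun lebesgue_stieltjes_measure.
From mathcomp.algebra_tactics Require Import ring lra.
Import Order.TTheory GRing.Theory Num.Theory.
Import numFieldNormedType.Exports.
Local Open Scope classical_set_scope.
Local Open Scope ring_scope.
Section P1.
Variable R : realType.

Lemma cs_count n (x : 'I_n -> R) :
  (\sum_i x i) ^+ 2 <= (\sum_i ((x i != 0)%:R : R)) * \sum_i x i ^+ 2.
Proof.
set S := \sum_i x i; set Q := \sum_i x i ^+ 2; set K := \sum_i _.
have K0 : 0 <= K by apply: sumr_ge0 => i _; rewrite ler0n.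
have Q0 : 0 <= Q by apply: sumr_ge0 => i _; rewrite sqr_ge0.
have [K00|Kne] := eqVneq K 0.
  have : forall i, x i = 0.
    move=> i; apply/eqP; apply: contraT => xi.
    have : (x i != 0)%:R <= K :> R.
      rewrite /K (bigD1 i) //= lerDl. apply: sumr_ge0 => j _; exact: ler0n.
    by rewrite K00 xi ler10.
  move=> x0; rewrite /S big1 ?expr0n //= ?mul0r ?K00 ?mul0r //.
have Kp : 0 < K by rewrite lt_def Kne K0.
pose c := S / K.
have cK : S = c * K by rewrite /c mulfVK.
have key : \sum_i ((x i != 0)%:R * (x i - c) ^+ 2) = Q - 2 * c * S + c ^+ 2 * K.
  rewrite (eq_bigr (fun i => x i ^+ 2 - 2 * c * x i + c ^+ 2 * (x i != 0)%:R)).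
    by rewrite big_split /= sumrB -!mulr_sumr.
  move=> i _; case: eqVneq => [->|_] /=; first by rewrite mulr0 mul0r; ring.
  by rewrite mul1r mulr1; ring.
have h : 0 <= Q - 2 * c * S + c ^+ 2 * K.
  rewrite -key; apply: sumr_ge0 => i _; apply: mulr_ge0; rewrite ?ler0n ?sqr_ge0 //.
have := mulr_ge0 K0 h; rewrite cK; nra.
Qed.

Definition b2r (b : bool) : R := b%:R.

Definition Tset (eps : R) (k : 'I_3) : set R :=
  if val k == 0%N then [set 0] else if val k == 1%N then [set y | 0 < `|y| < eps]
  else [set y | eps <= `|y|].
Definition uw (L : R) (k : 'I_3) : R :=
  if val k == 0%N then 1 else if val k == 1%N then expR (2^-1) else expR (2^-1 - L).
Definition phi (eps L y : R) := \sum_(k < 3) uw L k * \1_(Tset eps k) y.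

Lemma inPb (T : Type) (P : T -> bool) y : (y \in [set z | P z]) = P y.
Proof. by apply/idP/idP => [/set_mem|/mem_set]. Qed.
Lemma in1b (y a : R) : (y \in [set a]) = (y == a).
Proof. apply/idP/idP => [/set_mem ->|/eqP ->]; [exact: eqxx|exact: mem_set]. Qed.

Lemma phiE eps L y : 0 < eps ->
  phi eps L y = expR (b2r (y != 0) / 2 - L * b2r (eps <= `|y|)).
Proof.
move=> e0; rewrite /phi !big_ord_recr big_ord0 /= add0r /uw /Tset /=.
rewrite !indicE !inPb in1b /b2r.
have [->|y0] := eqVneq y 0.
  by rewrite normr0 ltxx /= lt_geF //= !mulr0 mul0r subr0 expR0 !addr0 mulr1.
rewrite normr_gt0 y0 /= mulr0 add0r mul1r.
have [ey|ye] := leP eps `|y|.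
  by rewrite /= mulr0 add0r !mulr1.
by rewrite /= mulr1 mulr0 addr0 mulr0 subr0.
Qed.

Lemma phi_gt0 eps L y : 0 < eps -> 0 < phi eps L y.
Proof. by move=> e0; rewrite phiE // expR_gt0. Qed.

Lemma pointwise n (x : 'I_n -> R) delta eps L : (0 < n)%N -> 0 < eps -> 0 <= L ->
  expR (n%:R * (empirical_pair x).1 ^+ 2 / (2 * (empirical_pair x).2))
    * \1_[set q : R * R | 0 < q.2 <= delta] (empirical_pair x)
  <= expR (n%:R * delta * L / eps ^+ 2) * \prod_i phi eps L (x i).
Proof.
move=> n0 e0 L0.
have P0 : 0 <= \prod_i phi eps L (x i).
  by apply: prodr_ge0 => i _; exact/ltW/phi_gt0.
rewrite indicE inPb /empirical_pair /=.
set Sx := \sum_i x i; set Q := \sum_i x i ^+ 2.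
have nR : 0 < n%:R :> R by rewrite ltr0n.
have [/andP[S0 Sd]|_] := boolP (0 < Q / n%:R <= delta); last first.
  by rewrite mulr0; apply: mulr_ge0 => //; exact/ltW/expR_gt0.
rewrite mulr1.
have Q0 : 0 < Q by move: S0; rewrite pmulr_lgt0 // invr_gt0.
under eq_bigr do rewrite phiE //.
rewrite -expR_sum -expRD ler_expR.
rewrite big_split /= -mulr_suml sumrN -mulr_sumr.
set K := \sum_i _; set C := \sum_i _.
have e1 : n%:R * (Sx / n%:R) ^+ 2 / (2 * (Q / n%:R)) = Sx ^+ 2 / (2 * Q).
  field; rewrite ?gt_eqF //.
rewrite e1.
have e2 : Sx ^+ 2 / (2 * Q) <= K / 2.
  rewrite ler_pdivrMr ?mulr_gt0 //.
  have h := @cs_count n x.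
  rewrite (_ : K / 2 * (2 * Q) = K * Q); last by field.
  exact: h.
have e3 : C * eps ^+ 2 <= Q.
  rewrite mulr_suml; apply: ler_sum => i _; rewrite /b2r.
  case: (leP eps `|x i|) => [ei|_]; last by rewrite mul0r sqr_ge0.
  rewrite mul1r -[x i ^+ 2]real_normK ?num_real // !expr2; apply: ler_pM => //; exact: ltW.
have e4 : Q <= n%:R * delta by rewrite -ler_pdivrMl // mulrC.
have e5 : C <= n%:R * delta / eps ^+ 2.
  by rewrite ler_pdivlMr ?exprn_gt0 // (le_trans e3 e4).
have e6 : L * C <= L * (n%:R * delta / eps ^+ 2) by exact: ler_wpM2l.
have e7 : L * (n%:R * delta / eps ^+ 2) = n%:R * delta * L / eps ^+ 2.
  by rewrite mulrC -!mulrA [L * _]mulrC.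
lra.
Qed.
End P1.

Section P4.
Variable R : realType.
Local Open Scope ereal_scope.

Lemma prod_indic (T : Type) n (E : 'I_n -> set T) w :
  (\prod_(i < n) \1_(E i) w = \1_(\bigcap_i E i) w :> R)%R.
Proof.
rewrite indicE; case: (boolP (w \in _)) => [/set_mem hw|hw].
  by rewrite big1 // => i _; rewrite indicE mem_set //; apply: hw.
have [i ni] : exists i, ~ E i w.
  apply/not_existsP => hh; move/negP: hw; apply; apply/mem_set => i _.
  by have := hh i => /contrapT.
by rewrite (bigD1 i) //= indicE memNset // mul0r.
Qed.

Lemma prod_indic2 (T : Type) n (B : 'I_n -> set R) (Y : 'I_n -> T -> R) w :
  (\prod_(i < n) \1_(B i) (Y i w) = \1_(\bigcap_i (Y i @^-1` B i)) w :> R)%R.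
Proof. by rewrite -prod_indic. Qed.

Lemma expect_prod d (T : measurableType d) (P : probability T R) n
  (X : 'I_n -> T -> R) (rho : probability R R) m (A : 'I_m -> set R) (u : 'I_m -> R) :
  iid_law P X rho -> (forall k, measurable (A k)) -> (forall k, 0 <= u k)%R ->
  \int[P]_w (\prod_(i < n) \sum_(k < m) u k * \1_(A k) (X i w))%:E =
  (((\sum_(k < m) u k * fine (rho (A k))) ^+ n)%R)%:E.
Proof.
case=> mX hX hind mA u0.
pose E (f : {ffun 'I_n -> 'I_m}) := \bigcap_i (X i @^-1` A (f i)).
have mE f : measurable (E f).
  apply: fin_bigcap_measurable => //.
  by move=> i _; rewrite -[X in measurable X]setTI; apply: mX.
have -> : (fun w => (\prod_(i < n) \sum_(k < m) u k * \1_(A k) (X i w))%:E) =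
   (fun w => \sum_(f : {ffun 'I_n -> 'I_m}) ((\prod_i u (f i)) * \1_(E f) w)%:E).
  apply: funext => w; rewrite bigA_distr_bigA /= sumEFin; congr (_%:E).
  apply: eq_bigr => f _; rewrite big_split /=; congr (_ * _)%R.
  by rewrite prod_indic2.
rewrite ge0_integral_sum //; last first.
  - by move=> f w _; rewrite lee_fin mulr_ge0 ?prodr_ge0 //.
  - move=> f; apply/measurable_EFinP; apply: measurable_funM => //.
have term (f : {ffun 'I_n -> 'I_m}) : \int[P]_x ((\prod_i u (f i)) * \1_(E f) x)%R%:E =
    (\prod_i (u (f i) * fine (rho (A (f i)))))%R%:E.
  rewrite (eq_integral (fun x => (\prod_i u (f i))%:E * (\1_(E f) x)%:E)); last first.
    by move=> x _; rewrite EFinM.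
  rewrite (@ge0_integralZl_EFin _ _ _ P setT measurableT (fun x => (\1_(E f) x)%:E)); last 3 first.
  - by move=> w _; rewrite lee_fin.
  - by apply/measurable_EFinP; exact: measurable_indic.
  - by rewrite prodr_ge0.
  have hE : P (E f) = \prod_i P (X i @^-1` A (f i)) by apply: hind => i; apply: mA.
  have hE' : P (E f) = (\prod_i fine (rho (A (f i))))%:E.
    rewrite hE -prodEFin; apply: eq_bigr => i _.
    by rewrite hX // fineK // fin_num_measure.
  rewrite integral_indic // setIT.
  transitivity ((\prod_i u (f i))%:E * (\prod_i fine (rho (A (f i))))%:E).
    by congr (_ * _); exact: hE'.
  by rewrite -EFinM -big_split.
rewrite (eq_bigr _ (fun f _ => term f)).
rewrite sumEFin; congr (_%:E).
rewrite [RHS](_ : _ = \prod_(i < n) \sum_(k < m) u k * fine (rho (A k)))%R; last by rewrite prodr_const card_ord.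
by rewrite bigA_distr_bigA.
Qed.
End P4.
Section P5.
Variable R : realType.

Lemma mDelta : measurable (@Deltastar R).
Proof.
apply: measurableD.
  have mf : measurable_fun setT (fun p : R * R => p.1 ^+ 2 <= p.2).
    apply: measurable_fun_ler; last exact: measurable_snd.
    by apply: measurable_funX; exact: measurable_fst.
  have := mf measurableT [set true] I; rewrite setTI.
  by congr measurable; apply/seteqP; split => p.
rewrite (_ : [set (0, 0)] = [set (0:R)] `*` [set (0:R)]).
  by apply: measurableX; exact: measurable_set1.
by apply/seteqP; split=> -[a b] /=; [case=> -> ->|case=> /= -> ->].
Qed.


Lemma mS (delta : R) : measurable [set q : R * R | 0 < q.2 <= delta].
Proof.
have := @measurable_snd _ _ R R measurableT _ (measurable_itv `]0, delta]); rewrite setTI.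
by congr measurable; apply/seteqP; split => p /=; rewrite in_itv.
Qed.

Lemma mg (n : nat) (delta : R) : measurable_fun setT (fun p : R * R =>
  (expR (n%:R * p.1 ^+ 2 / (2 * p.2)) * \1_[set q : R * R | 0 < q.2 <= delta] p)%:E).
Proof.
apply/measurable_EFinP.
rewrite (_ : (fun p : R * R => _) = (fun p : R * R => expR (n%:R * p.1 ^+ 2 *
    expR (- ln (2 * p.2))) * \1_[set q : R * R | 0 < q.2 <= delta] p)).
  apply: measurable_funM; last exact: measurable_indic (mS delta).
  apply: measurableT_comp; first exact: measurable_expR.
  apply: measurable_funM.
    apply: measurable_funM; first exact: measurable_cst.
    by apply: measurable_funX; exact: measurable_fst.
  apply: measurableT_comp; first exact: measurable_expR.
  apply: measurable_funN.
  apply: measurableT_comp; first exact: measurable_ln.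
  apply: measurable_funM; first exact: measurable_cst.
  exact: measurable_snd.
apply: funext => p; rewrite indicE inPb.
case: (boolP (0 < p.2 <= delta)) => [/andP[p0 _]|_]; last by rewrite !mulr0.
by rewrite expRN lnK // posrE mulr_gt0.
Qed.

Lemma mpair d (T : measurableType d) n (X : 'I_n -> T -> R) :
  (forall i, measurable_fun setT (X i)) ->
  measurable_fun setT (fun w => empirical_pair (fun i => X i w)).
Proof.
move=> mX; apply: measurable_fun_pair.
  apply: measurable_funM; last exact: measurable_cst.
  by apply: measurable_sum => i; exact: mX.
apply: measurable_funM; last exact: measurable_cst.
apply: measurable_sum => i; apply: measurable_funX; exact: mX.
Qed.

End P5.
Section P6.
Variable R : realType.

Lemma mTset (eps : R) k : measurable (Tset R eps k).
Proof.
rewrite /Tset; case: ifP => _; first exact: measurable_set1.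
case: ifP => _.
  rewrite (_ : [set y | _] = `]-eps, eps[%classic `\` [set 0]).
    by apply: measurableD; [exact: measurable_itv|exact: measurable_set1].
  apply/seteqP; split => y /=.
    by move=> /andP[y0 ye]; split; [rewrite in_itv /= -ltr_norml|move=> y00; move: y0; rewrite y00 normr0 ltxx].
  by rewrite in_itv /= -ltr_norml => -[ye /eqP y0]; rewrite normr_gt0 y0 ye.
rewrite (_ : [set y | _] = ~` `]-eps, eps[%classic).
  by apply: measurableC; exact: measurable_itv.
apply/seteqP; split => y /=.
  by move=> ey; rewrite in_itv /= -ltr_norml => /(le_lt_trans ey); rewrite ltxx.
by rewrite in_itv /= -ltr_norml => /negP; rewrite -leNgt.
Qed.

Lemma main_bound d (T : measurableType d) (P : probability T R) n
  (X : 'I_n -> T -> R) (rho : probability R R) (delta eps L : R) :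
  iid_law P X rho -> (0 < n)%N -> 0 < eps -> 0 <= L ->
  (\int[nu_tilde P X]_(p in @Deltastar R)
      (expR (n%:R * p.1 ^+ 2 / (2 * p.2)) * \1_[set q : R * R | 0 < q.2 <= delta] p)%:E
   <= (expR (n%:R * delta * L / eps ^+ 2) *
       (\sum_(k < 3) uw R L k * fine (rho (Tset R eps k))) ^+ n)%:E)%E.
Proof.
move=> iid n0 e0 L0.
have [mX _ _] := iid.
have mpr := @mpair R _ _ _ X mX.
have mD := mDelta R.
have mpD : measurable ((fun w => empirical_pair (fun i => X i w)) @^-1` @Deltastar R).
  by rewrite -[X in measurable X]setTI; apply: mpr.
have mF : measurable_fun setT (fun w => (expR (n%:R * delta * L / eps ^+ 2) *
    \prod_i phi R eps L (X i w))%:E).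
  apply/measurable_EFinP; apply: measurable_funM; first exact: measurable_cst.
  apply: measurable_prod => i _; rewrite /phi.
  apply: measurable_sum => k; apply: measurable_funM; first exact: measurable_cst.
  apply: measurableT_comp; last exact: mX.
  by apply: measurable_indic; exact: mTset.
rewrite /nu_tilde (ge0_integral_pushforward mpr) //; last first.
  by apply: (measurable_funS measurableT) => //; exact: mg.
set pr := (fun w => empirical_pair (fun i => X i w)).
set F := (fun w => (expR (n%:R * delta * L / eps ^+ 2) * \prod_i phi R eps L (X i w))%:E).
have H1 : (\int[P]_(x in pr @^-1` @Deltastar R) ((fun y : R * R =>
        (expR (n%:R * y.1 ^+ 2 / (2 * y.2)) * \1_[set q : R * R | 0 < q.2 <= delta] y)%:E) \o pr) x
    <= \int[P]_(x in pr @^-1` @Deltastar R) F x)%E.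
  apply: ge0_le_integral => //.
  - by move=> w _; rewrite lee_fin mulr_ge0 // ?expR_ge0.
  - apply: (measurable_funS measurableT) => //.
    exact: measurableT_comp (mg R n delta) mpr.
  - by apply: (measurable_funS measurableT) => //.
  - by move=> w _; rewrite lee_fin; exact: pointwise.
apply: (le_trans H1).
have F0 : forall w, setT w -> (0 <= F w)%E.
  move=> w _; rewrite lee_fin mulr_ge0 ?expR_ge0 // prodr_ge0 // => i _.
  exact/ltW/phi_gt0.
apply: le_trans (@ge0_subset_integral _ _ _ P _ setT mpD measurableT F mF F0 (@subsetT _ _)) _.
rewrite (eq_integral (fun w => ((expR (n%:R * delta * L / eps ^+ 2))%:E *
   (\prod_i phi R eps L (X i w))%:E)%E)); last by move=> w _; rewrite /F EFinM.
rewrite (@ge0_integralZl_EFin _ _ _ P setT measurableT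
   (fun w => (\prod_i phi R eps L (X i w))%:E)); last 3 first.
- move=> w _; rewrite lee_fin prodr_ge0 // => i _; exact/ltW/phi_gt0.
- apply/measurable_EFinP; apply: measurable_prod => i _; rewrite /phi.
  apply: measurable_sum => k; apply: measurable_funM; first exact: measurable_cst.
  apply: measurableT_comp; last exact: mX.
  by apply: measurable_indic; exact: mTset.
- exact: expR_ge0.
rewrite /phi (@expect_prod R _ _ P n X rho 3 (Tset R eps) (uw R L) iid).
- by rewrite -EFinM.
- exact: mTset.
- move=> k; rewrite /uw; case: ifP => _; [|case: ifP => _]; rewrite ?ler01 ?expR_ge0 //.
Qed.
End P6.
Section P7.
Variable R : realType.

Lemma p0_lt1 (rho : probability R R) : (0 < 'V_rho[idfun])%E -> fine (rho [set 0]) < 1.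
Proof.
move=> V0; rewrite ltNge; apply/negP => h.
have r1 : rho [set 0] = 1%E.
  apply/eqP; rewrite eq_le probability_le1 ?measurable_set1 //=.
  by rewrite -(fineK (fin_num_measure _ _ (measurable_set1 0))) lee_fin.
have rC : rho (~` [set 0]) = 0%E.
  by rewrite probability_setC ?measurable_set1 // r1 subee.
have I0 (g : R -> \bar R) : measurable_fun setT g -> g 0 = 0%E -> (\int[rho]_x g x = 0)%E.
  move=> mg g0; rewrite (@ae_eq_integral _ _ _ rho setT (cst 0%E)) //.
  - by rewrite integral0.
  - exists (~` [set 0]); split => //.
      by apply: measurableC; exact: measurable_set1.
    by move=> x /= hx x0; apply: hx => _; rewrite x0.
have E0 (g : R -> R) : measurable_fun setT g -> g 0 = 0 -> ('E_rho[g] = 0)%E.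
  move=> mg g0; rewrite unlock; apply: I0; last by rewrite g0.
  exact/measurable_EFinP.
move: V0; rewrite /variance unlock.
rewrite [X in fine X]E0 //; last exact: measurable_id.
have -> : ((idfun \- cst 0) * (idfun \- cst 0))%R = (fun x : R => x * x).
  by apply/funext => x; rewrite !fctE /= subr0.
rewrite E0 ?lt_irreflexive //= ?mulr0 //.
exact: measurable_funM.
Qed.


Lemma small_B (rho : probability R R) (eta : R) : 0 < eta ->
  exists eps : R, 0 < eps /\ fine (rho (Tset R eps (@Ordinal 3 1 erefl))) < eta.
Proof.
move=> eta0.
pose F (k : nat) := Tset R (k.+1%:R^-1) (@Ordinal 3 1 erefl).
have mF k : measurable (F k) by exact: mTset.
have Fni : nonincreasing_seq F.
  move=> m n mn; apply/asboolP => y; rewrite /F /Tset /= => /andP[y0 yl].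
  rewrite y0 (lt_le_trans yl) //.
  by rewrite lef_pV2 ?posrE ?ltr0n // ler_nat ltnS.
have F0 : \bigcap_n F n = set0.
  apply/seteqP; split => // y Fy.
  have := Fy (Num.truncn (`|y|^-1)) I; rewrite /F /Tset /= => /andP[y0 yl].
  have := Num.Theory.truncnS_gt (`|y|^-1).
  rewrite -(invrK (_.+1%:R)) ltf_pV2 ?posrE ?invr_gt0 ?ltr0n //.
  by move=> /(lt_trans yl); rewrite ltxx.
have cv := @nonincreasing_cvg_mu _ _ _ rho F _ mF (bigcapT_measurable mF) Fni.
rewrite F0 measure0 in cv.
have fin0 : (rho (F 0%N) < +oo)%E.
  by rewrite -(fineK (fin_num_measure _ _ (mF 0%N))) ltry.
have := cvgr_lt 0 (fine_cvg (cv fin0)) eta eta0.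
case => N _ hN; exists (N.+1%:R^-1); split; first by rewrite invr_gt0 ltr0n.
exact: (hN N (leqnn N)).
Qed.

End P7.
Theorem proposition4 (R : realType) (rho : probability R R) :
  symmetric_prob rho ->
  (0 < 'V_rho[idfun])%E ->
  (\forall uv \near ((0 : R), (0 : R)), Lambda_finite rho uv.1 uv.2) ->
  exists gamma : R, exists delta0 : R,
    [/\ 0 < gamma, 0 < delta0, (delta0%:E < 'V_rho[idfun])%E &
    forall delta : R, 0 < delta <= delta0 ->
      exists N : nat, (1 <= N)%N /\
      forall n : nat, (N <= n)%N ->
      forall (d : measure_display) (T : measurableType d) (P : probability T R)
             (X : 'I_n -> T -> R),
        iid_law P X rho ->
        (\int[nu_tilde P X]_(p in @Deltastar R)
            (expR (n%:R * p.1 ^+ 2 / (2 * p.2))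
              * \1_[set q : R * R | 0 < q.2 <= delta] p)%:E
          <= (expR (- (n%:R * gamma)))%:E)%E].
Proof.
move=> _ V0 _.
have [s [s0 sV]] : exists s : R, 0 < s /\ (s%:E < 'V_rho[idfun])%E.
  move: V0; case: ('V_rho[idfun]) => [v| |] //.
  - rewrite lte_fin => v0; exists (v / 2); split; first by rewrite divr_gt0.
    by rewrite lte_fin ltr_pdivrMr // ltr_pMr // ltr1n.
  - by move=> _; exists 1; split; rewrite ?ltr01 ?ltry.
set p0 := fine (rho [set 0]).
have p01 : p0 < 1 by exact: p0_lt1.
have p00 : 0 <= p0 by apply: fine_ge0; exact: measure_ge0.
have fle1 (A : set R) : measurable A -> fine (rho A) <= 1.
  move=> mA; rewrite -lee_fin fineK ?fin_num_measure //; exact: probability_le1.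
have fge0 (A : set R) : 0 <= fine (rho A) by apply: fine_ge0; exact: measure_ge0.
pose a := (1 - p0) / 4.
have a0 : 0 < a by rewrite divr_gt0 // subr_gt0.
have a1 : a < 1 by rewrite ltr_pdivrMr //; lra.
have [eps [e0 heps]] := @small_B R rho _ (divr_gt0 a0 (expR_gt0 (2^-1))).
pose L := 2^-1 - ln a.
have L0 : 0 < L by rewrite /L subr_gt0 (lt_trans (ln_lt0 _)) // ?a0 ?a1 // invr_gt0.
pose beta := \sum_(k < 3) uw R L k * fine (rho (Tset R eps k)).
pose beta0 := (1 + p0) / 2.
have hb0 : 0 <= beta.
  by apply: sumr_ge0 => k _; apply: mulr_ge0 => //; rewrite /uw;
     case: ifP => _; [|case: ifP => _]; rewrite ?ler01 ?expR_ge0.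
have hb : beta <= beta0.
  rewrite /beta !big_ord_recr big_ord0 /= add0r /uw /=.
  have -> : Tset R eps (widen_ord (leqnSn 2) (widen_ord (leqnSn 1) ord_max)) = [set 0] by [].
  rewrite -/p0 mul1r.
  have e1 : expR (2^-1 - L) = a by rewrite /L opprB addrC subrK lnK // posrE.
  rewrite e1.
  have h1 : expR 2^-1 * fine (rho (Tset R eps (widen_ord (leqnSn 2) ord_max))) <= a.
    rewrite mulrC -ler_pdivlMr ?expR_gt0 //; exact/ltW.
  have h2 : a * fine (rho (Tset R eps ord_max)) <= a.
    rewrite ler_piMr ?(ltW a0) //; exact: fle1 (mTset _ _ _).
  rewrite /beta0; move: h1 h2; rewrite /a; lra.
have b01 : 0 < beta0 < 1 by rewrite /beta0; apply/andP; split; lra.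
pose gamma := - ln beta0 / 2.
have g0 : 0 < gamma by rewrite /gamma divr_gt0 // oppr_gt0 ln_lt0.
have bg : beta0 = expR (- (2 * gamma)).
  by rewrite /gamma mulrC divfK ?pnatr_eq0 // opprK lnK // posrE; case/andP: b01.
pose delta0 := Num.min (gamma * eps ^+ 2 / L) s.
exists gamma, delta0; split => //.
- by rewrite lt_min s0 andbT divr_gt0 // mulr_gt0 // exprn_gt0.
- by apply: le_lt_trans sV; rewrite lee_fin ge_min lexx orbT.
move=> delta /andP[d0 dd0]; exists 1%N; split => // n n1 d T P X iid.
apply: le_trans (@main_bound R _ _ P n X rho delta eps L iid n1 e0 (ltW L0)) _.
rewrite lee_fin.
have hdl : delta * L / eps ^+ 2 <= gamma.
  rewrite ler_pdivrMr ?exprn_gt0 // -ler_pdivlMr //.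
  by apply: le_trans dd0 _; rewrite ge_min lexx.
have E1 : expR (n%:R * delta * L / eps ^+ 2) <= expR (n%:R * gamma).
  by rewrite ler_expR -!mulrA ler_wpM2l // mulrA.
have E2 : beta ^+ n <= expR (- (2 * gamma)) ^+ n.
  have hb00 : 0 <= beta0 by case/andP: b01 => /ltW.
  by rewrite -bg; apply: lerXn2r.
apply: le_trans (ler_pM _ _ E1 E2) _.
- exact: expR_ge0.
- exact: exprn_ge0.
rewrite -expRM_natl -expRD ler_expR; lra.
Qed.
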